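(* Let $\lambda_1\ge\lambda_2\ge\lambda_3\ge\lambda_4\ge0$ with $\sum_i\lambda_i=1$, and let $$\rho_{\vec\lambda}=\lambda_1\Phi_1+\lambda_2|01\rangle\langle01|+\lambda_3\Phi_2+\lambda_4|10\rangle\langle10|,\qquad \sigma_{\vec\lambda}=\sum_{j=1}^4\lambda_j\Phi_j.$$ If $1-\lambda_1-2\lambda_2\ge 0$, then there exists a non-entangling map $\Lambda:\mathcal{D}\to\mathcal{D}$ such that $\Lambda(\rho_{\vec\lambda})=\sigma_{\vec\lambda}$.
   Context: $\mathcal{D}$ is the set of two-qubit density matrices on $\mathbb{C}^2\otimes\mathbb{C}^2$ (Hermitian, positive semidefinite, trace one $4\times4$ matrices), written in the computational basis $\{|ij\rangle\}_{i,j\in\{0,1\}}$. The Bell vectors are $|\Phi_1\rangle=\frac{1}{\sqrt2}(|00\rangle+|11\rangle)$, $|\Phi_2\rangle=\frac{1}{\sqrt2}(|00\rangle-|11\rangle)$, $|\Phi_3\rangle=\frac{1}{\sqrt2}(|10\rangle+|01\rangle)$, $|\Phi_4\rangle=\frac{1}{\sqrt2}(|10\rangle-|01\rangle)$, and $\Phi_i=|\Phi_i\rangle\langle\Phi_i|$. A state is separable if it is a convex combination of product states $|\phi\rangle\langle\phi|\otimes|\chi\rangle\langle\chi|$. A map $\Lambda:\mathcal{D}\to\mathcal{D}$ is non-entangling (NE) if it is completely positive and trace preserving and maps every separable state to a separable state. *)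

(* Defs.v *)
From HB Require Import structures.
From mathcomp Require Import all_boot all_order all_algebra.
From mathcomp Require Import reals.
From mathcomp Require Import complex mxtens.
Set Implicit Arguments.
Unset Strict Implicit.
Unset Printing Implicit Defensive.
Import Order.TTheory GRing.Theory Num.Theory.
Local Open Scope ring_scope.

Section QI.
Variable R : realType.
Local Notation C := (R[i]).

Definition adjmx {m n} (A : 'M[C]_(m, n)) : 'M[C]_(n, m) := (map_mx Num.conj A)^T.

Definition hermitian {n} (A : 'M[C]_n) : Prop := adjmx A = A.

Definition psd {n} (A : 'M[C]_n) : Prop :=
  hermitian A /\ forall v : 'cV[C]_n, 0 <= (adjmx v *m A *m v) 0 0.

Definition density {n} (A : 'M[C]_n) : Prop := psd A /\ \tr A = 1.

Definition proj {n} (v : 'cV[C]_n) : 'M[C]_n := v *m adjmx v.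

Definition unit_vec {n} (v : 'cV[C]_n) : Prop := (adjmx v *m v) 0 0 = 1.

(* computational basis |ij> of C^2 (x) C^2, with index i*2+j (mxtens_index) *)
Definition ket (i j : 'I_2) : 'cV[C]_(2 * 2) :=
  delta_mx (mxtens_index (i, j)) 0.

Definition invsqrt2 : C := real_complex R (Num.sqrt (2 : R))^-1.

Definition bell1 : 'cV[C]_(2*2) := invsqrt2 *: (ket 0 0 + ket 1 1).
Definition bell2 : 'cV[C]_(2*2) := invsqrt2 *: (ket 0 0 - ket 1 1).
Definition bell3 : 'cV[C]_(2*2) := invsqrt2 *: (ket 1 0 + ket 0 1).
Definition bell4 : 'cV[C]_(2*2) := invsqrt2 *: (ket 1 0 - ket 0 1).

Definition separable (rho : 'M[C]_(2 * 2)) : Prop :=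
  exists (N : nat) (p : 'I_N -> R) (phi chi : 'I_N -> 'cV[C]_2),
    (forall k, 0 <= p k) /\ \sum_(k < N) p k = 1 /\
    (forall k, unit_vec (phi k) /\ unit_vec (chi k)) /\
    rho = \sum_(k < N) real_complex R (p k) *: (proj (phi k) *t proj (chi k)).

(* (id_k (x) L) applied to X acting on C^k (x) C^(2*2) *)
Definition ampl (k : nat) (L : 'M[C]_(2 * 2) -> 'M[C]_(2 * 2))
    (X : 'M[C]_(k * (2 * 2))) : 'M[C]_(k * (2 * 2)) :=
  \matrix_(p, q)
    let: (i, a) := mxtens_unindex p in
    let: (j, b) := mxtens_unindex q in
    L (\matrix_(a', b') X (mxtens_index (i, a')) (mxtens_index (j, b'))) a b.

Definition completely_positive (L : 'M[C]_(2 * 2) -> 'M[C]_(2 * 2)) : Prop :=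
  forall (k : nat) (X : 'M[C]_(k * (2 * 2))), psd X -> psd (ampl L X).

Definition trace_preserving (L : 'M[C]_(2 * 2) -> 'M[C]_(2 * 2)) : Prop :=
  forall X, \tr (L X) = \tr X.

Definition non_entangling (L : {linear 'M[C]_(2 * 2) -> 'M[C]_(2 * 2)}) : Prop :=
  completely_positive L /\ trace_preserving L /\
  forall rho, density rho -> separable rho -> separable (L rho).

Definition rho_lam (l1 l2 l3 l4 : R) : 'M[C]_(2 * 2) :=
  real_complex R l1 *: proj bell1 + real_complex R l2 *: proj (ket 0 1)
  + real_complex R l3 *: proj bell2 + real_complex R l4 *: proj (ket 1 0).

Definition sigma_lam (l1 l2 l3 l4 : R) : 'M[C]_(2 * 2) :=
  real_complex R l1 *: proj bell1 + real_complex R l2 *: proj bell2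
  + real_complex R l3 *: proj bell3 + real_complex R l4 *: proj bell4.

End QI.

(* Main.v *)
Require Import Defs.
From HB Require Import structures.
From mathcomp Require Import all_boot all_order all_algebra.
From mathcomp Require Import reals.
From mathcomp Require Import complex mxtens.
From mathcomp Require Import ring lra.
Import Defs.
Set Implicit Arguments.
Unset Strict Implicit.
Unset Printing Implicit Defensive.
Import Order.TTheory GRing.Theory Num.Theory.
Local Open Scope ring_scope.
Notation idx a b := (@mxtens_index 2 2 (a, b)).
Section S.
Variable R : realType.
Local Notation C := R[i].

Lemma conjRC (x : R) : Num.conj (real_complex R x) = real_complex R x.
Proof.
apply: conj_Creal; rewrite realE ler0c.
have [h|h] := leP 0 x; first by [].
by rewrite -[0 : C]/(0%:C)%C lecR ltW.
Qed.

Lemma adjmxE m n (A : 'M[C]_(m,n)) i j : adjmx A i j = Num.conj (A j i).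
Proof. by rewrite !mxE. Qed.

Lemma adjmxK m n (A : 'M[C]_(m,n)) : adjmx (adjmx A) = A.
Proof. by apply/matrixP=> i j; rewrite !adjmxE conjCK. Qed.

Lemma adjmxM m n p (A : 'M[C]_(m,n)) (B : 'M[C]_(n,p)) :
  adjmx (A *m B) = adjmx B *m adjmx A.
Proof.
apply/matrixP=> i j; rewrite !mxE rmorph_sum; apply: eq_bigr => k _.
by rewrite !mxE rmorphM mulrC.
Qed.

Lemma adjmxD m n (A B : 'M[C]_(m,n)) : adjmx (A + B) = adjmx A + adjmx B.
Proof. by apply/matrixP=> i j; rewrite !mxE rmorphD. Qed.

Lemma adjmxZ m n c (A : 'M[C]_(m,n)) : adjmx (c *: A) = Num.conj c *: adjmx A.
Proof. by apply/matrixP=> i j; rewrite !mxE rmorphM. Qed.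

Lemma psd_cong m n (A : 'M[C]_n) (B : 'M[C]_(m,n)) :
  psd A -> psd (B *m A *m adjmx B).
Proof.
case=> hA pA; split.
  by rewrite /hermitian !adjmxM adjmxK hA mulmxA.
move=> v; have := pA (adjmx B *m v).
by rewrite adjmxM adjmxK !mulmxA.
Qed.

Lemma psd_add n (A B : 'M[C]_n) : psd A -> psd B -> psd (A + B).
Proof.
case=> hA pA [hB pB]; split; first by rewrite /hermitian adjmxD hA hB.
by move=> v; rewrite mulmxDr mulmxDl mxE addr_ge0.
Qed.

Lemma psd_scale n (A : 'M[C]_n) c : 0 <= c -> psd A -> psd (c *: A).
Proof.
move=> c0 [hA pA]; split.
  by rewrite /hermitian adjmxZ hA conj_Creal // ger0_real.
by move=> v; rewrite -scalemxAr -scalemxAl mxE mulr_ge0.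
Qed.

Definition qf n (v : 'cV[C]_n) (Y : 'M[C]_n) := (adjmx v *m Y *m v) 0 0.

Lemma ampl_add k (L1 L2 : 'M[C]_(2*2) -> 'M[C]_(2*2)) X :
  ampl (fun Y => L1 Y + L2 Y) X = ampl L1 X + ampl L2 X :> 'M_(k * (2*2)).
Proof.
apply/matrixP=> p q; rewrite !mxE.
by case: (mxtens_unindex p) => i a; case: (mxtens_unindex q) => j b; rewrite mxE.
Qed.

Lemma ampl_scale k c (L1 : 'M[C]_(2*2) -> 'M[C]_(2*2)) X :
  ampl (fun Y => c *: L1 Y) X = c *: ampl L1 X :> 'M_(k * (2*2)).
Proof.
apply/matrixP=> p q; rewrite !mxE.
by case: (mxtens_unindex p) => i a; case: (mxtens_unindex q) => j b; rewrite mxE.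
Qed.

Lemma ampl_ext k (L1 L2 : 'M[C]_(2*2) -> 'M[C]_(2*2)) X :
  (forall Y, L1 Y = L2 Y) -> ampl L1 X = ampl L2 X :> 'M_(k * (2*2)).
Proof.
move=> e; apply/matrixP=> p q; rewrite !mxE.
by case: (mxtens_unindex p) => i a; case: (mxtens_unindex q) => j b; rewrite e.
Qed.

Lemma cp_add L1 L2 : @completely_positive R L1 -> @completely_positive R L2 ->
  (@completely_positive R) (fun Y => L1 Y + L2 Y).
Proof. by move=> h1 h2 k X hX; rewrite ampl_add; apply: psd_add; auto. Qed.

Lemma cp_scale c L1 : 0 <= c -> @completely_positive R L1 ->
  (@completely_positive R) (fun Y => c *: L1 Y).
Proof. by move=> c0 h1 k X hX; rewrite ampl_scale; apply: psd_scale; auto. Qed.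

Lemma cp_ext L1 L2 : (forall Y, L1 Y = L2 Y) -> @completely_positive R L1 ->
  @completely_positive R L2.
Proof. by move=> e h1 k X hX; rewrite -(ampl_ext _ e); auto. Qed.

Lemma sum_idx k (V : zmodType) (F : 'I_(k * (2*2)) -> V) :
  \sum_p F p = \sum_(i < k) \sum_(a < 2*2) F (mxtens_index (i, a)).
Proof.
rewrite pair_big /=; apply: reindex => /=.
exists (@mxtens_unindex k (2*2)) => x _.
  by rewrite -surjective_pairing mxtens_indexK.
by rewrite -surjective_pairing mxtens_unindexK.
Qed.

Lemma sum_delta n (F : 'I_n -> C) j : \sum_i ((i == j)%:R * F i) = F j.
Proof.
rewrite (bigD1 j) //= eqxx mul1r big1 ?addr0 // => i /negbTE ->.
by rewrite mul0r.
Qed.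

Lemma sum_delta' n (F : 'I_n -> C) j : \sum_i ((j == i)%:R * F i) = F j.
Proof. by rewrite -(sum_delta F j); apply: eq_bigr => i _; rewrite eq_sym. Qed.

Lemma qf_contract k (w : 'cV[C]_(2*2)) (Z : 'M[C]_(k * (2*2))) i j :
  let W : 'M[C]_(k * (2*2), k) := \matrix_(p, j)
   (((mxtens_unindex p).1 == j)%:R * w (mxtens_unindex p).2 0) in
  (adjmx W *m Z *m W) i j =
  qf w (\matrix_(a', b') Z (mxtens_index (i, a')) (mxtens_index (j, b'))).
Proof.
move=> W.
have hW : forall i' a' j', W (mxtens_index (i',a')) j' = (i' == j')%:R * w a' 0.
  by move=> i' a' j'; rewrite mxE mxtens_indexK.
rewrite /qf mxE sum_idx.
under eq_bigr => j' _ do under eq_bigr => b' _ do rewrite hW mulrCA.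
under eq_bigr => j' _ do rewrite -mulr_sumr.
rewrite sum_delta mxE; apply: eq_bigr => b' _; congr (_ * _).
rewrite !mxE sum_idx.
under eq_bigr => j' _ do under eq_bigr => a' _ do rewrite adjmxE hW rmorphM rmorph_nat -mulrA.
under eq_bigr => j' _ do rewrite -mulr_sumr.
rewrite sum_delta; apply: eq_bigr => a' _.
by rewrite !mxE.
Qed.

Lemma cp_rank1 (w u : 'cV[C]_(2*2)) :
  (@completely_positive R) (fun Y => qf w Y *: proj u).
Proof.
move=> k X hX.
pose W : 'M[C]_(k * (2*2), k) := \matrix_(p, j)
   (((mxtens_unindex p).1 == j)%:R * w (mxtens_unindex p).2 0).
pose U : 'M[C]_(k * (2*2), k) := \matrix_(p, j)
   (((mxtens_unindex p).1 == j)%:R * u (mxtens_unindex p).2 0).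
suff -> : ampl (fun Y => qf w Y *: proj u) X =
   U *m (adjmx W *m X *m adjmx (adjmx W)) *m adjmx U.
  by apply: psd_cong; apply: psd_cong.
rewrite adjmxK.
apply/matrixP=> p q.
case: (mxtens_indexP p) => i a; case: (mxtens_indexP q) => j b.
rewrite mxE !mxtens_indexK mxE.
rewrite [RHS]mxE.
under eq_bigr do rewrite mxE.
have hU : forall i' a' j', U (mxtens_index (i',a')) j' = (i' == j')%:R * u a' 0.
  by move=> i' a' j'; rewrite mxE mxtens_indexK.
rewrite (eq_bigr (fun i0 => (j == i0)%:R * (u a 0 * (adjmx W *m X *m W) i i0 * Num.conj (u b 0)))); last first.
  move=> i0 _; rewrite adjmxE hU.
  rewrite (eq_bigr (fun j0 => (i == j0)%:R * (u a 0 * (adjmx W *m X *m W) j0 i0))); last first.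
    by move=> j0 _; rewrite hU -!mulrA.
  by rewrite sum_delta' rmorphM rmorph_nat; ring.
rewrite sum_delta' qf_contract /proj mxE big_ord1 adjmxE; ring.
Qed.

Definition i00 := idx (0:'I_2) (0:'I_2).
Definition i01 := idx (0:'I_2) (1:'I_2).
Definition i10 := idx (1:'I_2) (0:'I_2).
Definition i11 := idx (1:'I_2) (1:'I_2).

Lemma ord2P (P : 'I_2 -> Prop) : P 0 -> P 1 -> forall a, P a.
Proof.
move=> h0 h1 [[|[|n]] hn] //.
- by rewrite (_ : Ordinal hn = 0) //; apply: val_inj.
- by rewrite (_ : Ordinal hn = 1) //; apply: val_inj.
Qed.

Lemma sum4 (V : zmodType) (F : 'I_(2*2) -> V) :
  \sum_p F p = F i00 + F i01 + F i10 + F i11.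
Proof.
transitivity (\sum_(i<2) \sum_(j<2) F (idx i j)).
  rewrite pair_big /=; apply: reindex => /=.
  exists (@mxtens_unindex 2 2) => x _.
    by rewrite -surjective_pairing mxtens_indexK.
  by rewrite -surjective_pairing mxtens_unindexK.
rewrite !big_ord_recl !big_ord0 !addr0 addrA.
rewrite /i00 /i01 /i10 /i11.
do 4! [congr (_ + _) | idtac]; congr F; apply: val_inj => //.
Qed.

Lemma mx4P (A B : 'M[C]_(2*2)) :
  (forall a b c d : 'I_2, A (idx a b) (idx c d) = B (idx a b) (idx c d)) -> A = B.
Proof.
move=> h; apply/matrixP => p q.
by case: (mxtens_indexP p) => a b; case: (mxtens_indexP q) => c d; apply: h.
Qed.


Definition bf n (v w : 'cV[C]_n) (Y : 'M[C]_n) := (adjmx v *m Y *m w) 0 0.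
Definition ip n (v w : 'cV[C]_n) := (adjmx v *m w) 0 0.

Lemma qfE n (v : 'cV[C]_n) Y : qf v Y = bf v v Y. Proof. by []. Qed.

Lemma bfDl n (v1 v2 w : 'cV[C]_n) Y : bf (v1 + v2) w Y = bf v1 w Y + bf v2 w Y.
Proof. by rewrite /bf adjmxD !mulmxDl mxE. Qed.
Lemma bfDr n (v w1 w2 : 'cV[C]_n) Y : bf v (w1 + w2) Y = bf v w1 Y + bf v w2 Y.
Proof. by rewrite /bf mulmxDr mxE. Qed.
Lemma bfZl n c (v w : 'cV[C]_n) Y : bf (c *: v) w Y = Num.conj c * bf v w Y.
Proof. by rewrite /bf adjmxZ -!scalemxAl mxE. Qed.
Lemma bfZr n c (v w : 'cV[C]_n) Y : bf v (c *: w) Y = c * bf v w Y.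
Proof. by rewrite /bf -scalemxAr mxE. Qed.
Lemma bfNl n (v w : 'cV[C]_n) Y : bf (- v) w Y = - bf v w Y.
Proof. by rewrite -scaleN1r bfZl rmorphN1 mulN1r. Qed.
Lemma bfNr n (v w : 'cV[C]_n) Y : bf v (- w) Y = - bf v w Y.
Proof. by rewrite -scaleN1r bfZr mulN1r. Qed.
Lemma bfY n (v w : 'cV[C]_n) c Y Z : bf v w (c *: Y + Z) = c * bf v w Y + bf v w Z.
Proof. by rewrite /bf mulmxDr mulmxDl -scalemxAr -scalemxAl !mxE. Qed.
Lemma bf_delta n (p q : 'I_n) Y : bf (delta_mx p 0) (delta_mx q 0) Y = Y p q.
Proof.
rewrite /bf !mxE (bigD1 q) //= big1 ?addr0; last first.
  by move=> j /negbTE hj; rewrite !mxE hj mulr0.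
rewrite !mxE !eqxx mulr1 (bigD1 p) //= big1 ?addr0; last first.
  by move=> j /negbTE hj; rewrite !mxE hj /= rmorph0 mul0r.
by rewrite !mxE !eqxx /= rmorph1 mul1r.
Qed.

Lemma ipDl n (v1 v2 w : 'cV[C]_n) : ip (v1 + v2) w = ip v1 w + ip v2 w.
Proof. by rewrite /ip adjmxD !mulmxDl mxE. Qed.
Lemma ipDr n (v w1 w2 : 'cV[C]_n) : ip v (w1 + w2) = ip v w1 + ip v w2.
Proof. by rewrite /ip mulmxDr mxE. Qed.
Lemma ipZl n c (v w : 'cV[C]_n) : ip (c *: v) w = Num.conj c * ip v w.
Proof. by rewrite /ip adjmxZ -!scalemxAl mxE. Qed.
Lemma ipZr n c (v w : 'cV[C]_n) : ip v (c *: w) = c * ip v w.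
Proof. by rewrite /ip -scalemxAr mxE. Qed.
Lemma ipNl n (v w : 'cV[C]_n) : ip (- v) w = - ip v w.
Proof. by rewrite -scaleN1r ipZl rmorphN1 mulN1r. Qed.
Lemma ipNr n (v w : 'cV[C]_n) : ip v (- w) = - ip v w.
Proof. by rewrite -scaleN1r ipZr mulN1r. Qed.
Lemma ip_delta n (p q : 'I_n) : ip (delta_mx p 0) (delta_mx q 0) = (p == q)%:R.
Proof.
rewrite /ip !mxE (bigD1 q) //= big1 ?addr0; last first.
  by move=> j /negbTE hj; rewrite !mxE hj mulr0.
by rewrite !mxE !eqxx andbT mulr1 rmorph_nat eq_sym.
Qed.

Lemma qf_proj n (v w : 'cV[C]_n) : qf v (proj w) = ip v w * ip w v.
Proof.
rewrite /qf /proj /ip !mulmxA -(mulmxA (adjmx v *m w)) [LHS]mxE big_ord1.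
by [].
Qed.

Lemma tr_proj n (v : 'cV[C]_n) : \tr (proj v) = ip v v.
Proof.
rewrite /mxtrace /ip mxE; apply: eq_bigr => p _.
by rewrite !mxE big_ord1 !mxE mulrC.
Qed.

Lemma projE n (v : 'cV[C]_n) p q : proj v p q = v p 0 * Num.conj (v q 0).
Proof. by rewrite /proj mxE big_ord1 adjmxE. Qed.

Definition s2 : C := invsqrt2 R.

Lemma s2s2 : Num.conj s2 * s2 = 2^-1.
Proof.
rewrite /s2 /invsqrt2 conjRC -rmorphM -invfM -expr2 sqr_sqrtr ?ler0n //.
by rewrite fmorphV rmorph_nat.
Qed.

Lemma qf_s2 n (v : 'cV[C]_n) Y : qf (s2 *: v) Y = 2^-1 * qf v Y.
Proof. by rewrite !qfE bfZl bfZr mulrA s2s2. Qed.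
Lemma ip_s2 n (v w : 'cV[C]_n) : ip (s2 *: v) (s2 *: w) = 2^-1 * ip v w.
Proof. by rewrite ipZl ipZr mulrA s2s2. Qed.
Lemma proj_s2 n (v : 'cV[C]_n) : proj (s2 *: v) = 2^-1 *: proj v.
Proof.
by rewrite /proj adjmxZ -scalemxAr -scalemxAl scalerA s2s2.
Qed.


Lemma sum_pair m n (V : zmodType) (F : 'I_(m * n) -> V) :
  \sum_p F p = \sum_(i < m) \sum_(a < n) F (mxtens_index (i, a)).
Proof.
rewrite pair_big /=; apply: reindex => /=.
exists (@mxtens_unindex m n) => x _.
  by rewrite -surjective_pairing mxtens_indexK.
by rewrite -surjective_pairing mxtens_unindexK.
Qed.

Lemma tr_tens m n (A : 'M[C]_m) (B : 'M[C]_n) : \tr (A *t B) = \tr A * \tr B.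
Proof.
rewrite /mxtrace sum_pair mulr_suml; apply: eq_bigr => i _.
by rewrite mulr_sumr; apply: eq_bigr => a _; rewrite tensmxE.
Qed.

Definition sepcone (A : 'M[C]_(2*2)) :=
  exists (N : nat) (p : 'I_N -> R) (phi chi : 'I_N -> 'cV[C]_2),
    (forall k, 0 <= p k) /\
    (forall k, unit_vec (phi k) /\ unit_vec (chi k)) /\
    A = \sum_(k < N) real_complex R (p k) *: (proj (phi k) *t proj (chi k)).

Lemma sepcone_prod (phi chi : 'cV[C]_2) : unit_vec phi -> unit_vec chi ->
  sepcone (proj phi *t proj chi).
Proof.
move=> u1 u2; exists 1%N, (fun _ => 1), (fun _ => phi), (fun _ => chi).
split; first by move=> _; exact: ler01.
split; first by [].
by rewrite big_ord1 rmorph1 scale1r.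
Qed.

Lemma sepcone_scale (c : R) A : 0 <= c -> sepcone A -> sepcone (real_complex R c *: A).
Proof.
move=> c0 [N [p [phi [chi [hp [hu ->]]]]]].
exists N, (fun k => c * p k), phi, chi; split; first by move=> k; rewrite mulr_ge0.
split; first by [].
rewrite scaler_sumr; apply: eq_bigr => k _; by rewrite scalerA rmorphM.
Qed.

Lemma sepcone_add A B : sepcone A -> sepcone B -> sepcone (A + B).
Proof.
move=> [N [p [phi [chi [hp [hu ->]]]]]] [M [q [psi [xi [hq [hv ->]]]]]].
pose P (k : 'I_(N + M)) := match split k with inl i => p i | inr j => q j end.
pose F1 (k : 'I_(N + M)) := match split k with inl i => phi i | inr j => psi j end.
pose F2 (k : 'I_(N + M)) := match split k with inl i => chi i | inr j => xi j end.
exists (N + M)%N, P, F1, F2; split.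
  by move=> k; rewrite /P; case: (split k).
split; first by move=> k; rewrite /F1 /F2; case: (split k).
rewrite big_split_ord; apply: f_equal2; apply: eq_bigr => i _.
  by rewrite /P /F1 /F2 (unsplitK (inl i)).
by rewrite /P /F1 /F2 (unsplitK (inr i)).
Qed.

Lemma sep_of_cone A : sepcone A -> \tr A = 1 -> separable A.
Proof.
move=> [N [p [phi [chi [hp [hu eA]]]]]] htr.
exists N, p, phi, chi; split; first by [].
split; last by split.
apply: (@complexI R); rewrite rmorph_sum rmorph1 -htr eA raddf_sum.
apply: eq_bigr => k _ /=; rewrite mxtraceZ tr_tens !tr_proj.
by case: (hu k) => h1 h2; rewrite /ip h1 h2 !mulr1.
Qed.


Lemma ord2_cases (a : 'I_2) : a = 0 \/ a = 1.
Proof. by move: a; apply: ord2P; [left|right]. Qed.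

Definition e0 : 'cV[C]_2 := delta_mx 0 0.
Definition e1 : 'cV[C]_2 := delta_mx 1 0.
Definition xp := e0 + e1.
Definition xm := e0 - e1.
Definition yp := e0 + 'i *: e1.
Definition ym := e0 - 'i *: e1.

Lemma ii : 'i * 'i = -1 :> C. Proof. by rewrite -expr2 sqrCi. Qed.

Lemma mxaddE m n (A B : 'M[C]_(m,n)) i j : (A + B) i j = A i j + B i j.
Proof. by rewrite mxE. Qed.
Lemma mxsubE m n (A B : 'M[C]_(m,n)) i j : (A - B) i j = A i j - B i j.
Proof. by rewrite !mxE. Qed.
Lemma mxscaleE m n c (A : 'M[C]_(m,n)) i j : (c *: A) i j = c * A i j.
Proof. by rewrite mxE. Qed.
Lemma deltaE m n (i : 'I_m) (j : 'I_n) a b : (delta_mx i j : 'M[C]_(m,n)) a b = ((a == i) && (b == j))%:R.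
Proof. by rewrite mxE. Qed.
Lemma idx_eq (a b c d : 'I_2) : (idx a b == idx c d) = (a == c) && (b == d).
Proof.
apply/eqP/andP => [h|[/eqP-> /eqP->]] //.
by have := congr1 (@mxtens_unindex 2 2) h; rewrite !mxtens_indexK => -[-> ->].
Qed.
Lemma ne01 : ((0 : 'I_2) == 1) = false. Proof. by []. Qed.
Lemma ne10 : ((1 : 'I_2) == 0) = false. Proof. by []. Qed.
Lemma mxoppE m n (A : 'M[C]_(m,n)) i j : (- A) i j = - A i j.
Proof. by rewrite mxE. Qed.
Lemma ketE x y a b : ket R x y (idx a b) 0 = ((a == x) && (b == y))%:R.
Proof. by rewrite /ket mxE idx_eq andbT. Qed.
Lemma e0E a : e0 a 0 = (a == 0)%:R. Proof. by rewrite /e0 mxE andbT. Qed.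
Lemma e1E a : e1 a 0 = (a == 1)%:R. Proof. by rewrite /e1 mxE andbT. Qed.
Lemma b2R_true : ((true : nat)%:R : C) = 1. Proof. by []. Qed.
Lemma b2R_false : ((false : nat)%:R : C) = 0. Proof. by []. Qed.

Ltac crunch1 :=
  repeat (erewrite mxaddE || erewrite mxoppE || erewrite mxscaleE ||
    erewrite tensmxE || erewrite projE || erewrite ketE || erewrite e0E || erewrite e1E).

Lemma cjD (x y : C) : Num.conj (x + y) = Num.conj x + Num.conj y. Proof. exact: rmorphD. Qed.
Lemma cjN (x : C) : Num.conj (- x) = - Num.conj x. Proof. exact: rmorphN. Qed.
Lemma cjM (x y : C) : Num.conj (x * y) = Num.conj x * Num.conj y. Proof. exact: rmorphM. Qed.
Lemma cj0 : Num.conj (0 : C) = 0. Proof. exact: rmorph0. Qed.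
Lemma cj1 : Num.conj (1 : C) = 1. Proof. exact: rmorph1. Qed.

Lemma iA1 (a b : C) : a * 'i * (b * 'i) = - (a * b).
Proof. by rewrite mulrACA ii mulrN1. Qed.
Lemma iA2 (b : C) : 'i * (b * 'i) = - b.
Proof. by rewrite mulrCA ii mulrN1. Qed.
Lemma iA3 (a : C) : a * 'i * 'i = - a.
Proof. by rewrite -mulrA ii mulrN1. Qed.

Ltac crunch2 :=
  rewrite ?(eqxx, ne01, ne10, andbT, andbF, andTb, andFb, b2R_true, b2R_false);
  rewrite ?(cjD, cjN, cjM, cj0, cj1, conjCi).

Ltac cases4 a b c d :=
  case: (ord2_cases a) => ->; case: (ord2_cases b) => ->;
  case: (ord2_cases c) => ->; case: (ord2_cases d) => ->.

Lemma two_neq0 : (2 : C) != 0. Proof. by rewrite pnatr_eq0. Qed.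

Ltac vid := rewrite /bell1 /bell2 /bell3 /bell4 -/s2 ?proj_s2;
  apply: mx4P; apply: ord2P; apply: ord2P; apply: ord2P; apply: ord2P;
  rewrite /xp /xm /yp /ym; crunch1; crunch2; (field: ii; done).

Lemma V12 : proj (bell1 R) + proj (bell2 R) = proj e0 *t proj e0 + proj e1 *t proj e1.
Proof. vid. Qed.
Lemma V34 : proj (bell3 R) + proj (bell4 R) = proj e0 *t proj e1 + proj e1 *t proj e0.
Proof. vid. Qed.
Lemma V13 : proj (bell1 R) + proj (bell3 R) =
  proj (s2 *: xp) *t proj (s2 *: xp) + proj (s2 *: xm) *t proj (s2 *: xm).
Proof. vid. Qed.
Lemma V24 : proj (bell2 R) + proj (bell4 R) =
  proj (s2 *: xp) *t proj (s2 *: xm) + proj (s2 *: xm) *t proj (s2 *: xp).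
Proof. vid. Qed.
Lemma V14 : proj (bell1 R) + proj (bell4 R) =
  proj (s2 *: yp) *t proj (s2 *: ym) + proj (s2 *: ym) *t proj (s2 *: yp).
Proof. vid. Qed.
Lemma V23 : proj (bell2 R) + proj (bell3 R) =
  proj (s2 *: yp) *t proj (s2 *: yp) + proj (s2 *: ym) *t proj (s2 *: ym).
Proof. vid. Qed.

End S.

Section S2.
Variable R : realType.
Local Notation C := R[i].
Local Notation s2 := (s2 R).
Local Notation e0 := (e0 R).
Local Notation e1 := (e1 R).
Local Notation xp := (xp R).
Local Notation xm := (xm R).
Local Notation yp := (yp R).
Local Notation ym := (ym R).
Lemma qfD n (v : 'cV[C]_n) A B : qf v (A + B) = qf v A + qf v B.
Proof. by rewrite /qf mulmxDr mulmxDl mxE. Qed.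
Lemma qfZ n (v : 'cV[C]_n) c A : qf v (c *: A) = c * qf v A.
Proof. by rewrite /qf -scalemxAr -scalemxAl mxE. Qed.
Lemma qfY n (v : 'cV[C]_n) c A B : qf v (c *: A + B) = c * qf v A + qf v B.
Proof. by rewrite qfD qfZ. Qed.
Lemma qf_sum n (v : 'cV[C]_n) N (F : 'I_N -> 'M[C]_n) :
  qf v (\sum_(k < N) F k) = \sum_(k < N) qf v (F k).
Proof. by rewrite /qf mulmx_sumr mulmx_suml summxE. Qed.

Ltac ipcrunch :=
  rewrite /bell1 /bell2 /bell3 /bell4 /ket -/s2;
  rewrite ?(ip_s2, ipZl, ipZr, ipDl, ipDr, ipNl, ipNr, ip_delta);
  rewrite ?(idx_eq, eqxx, ne01, ne10, andbT, andbF, andTb, andFb, b2R_true, b2R_false).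

Lemma ip_b1 : ip (bell1 R) (bell1 R) = 1. Proof. ipcrunch; field: (s2s2 R); done. Qed.
Lemma ip_b2 : ip (bell2 R) (bell2 R) = 1. Proof. ipcrunch; field: (s2s2 R); done. Qed.
Lemma ip_b3 : ip (bell3 R) (bell3 R) = 1. Proof. ipcrunch; field: (s2s2 R); done. Qed.
Lemma ip_b4 : ip (bell4 R) (bell4 R) = 1. Proof. ipcrunch; field: (s2s2 R); done. Qed.

Lemma qf_sum4 Y : qf (bell1 R) Y + qf (bell2 R) Y + qf (ket R 0 1) Y + qf (ket R 1 0) Y = \tr Y.
Proof.
rewrite /bell1 /bell2 -/s2 !qf_s2 !qfE /ket.
rewrite ?(bfDl, bfDr, bfNl, bfNr, bf_delta).
rewrite /mxtrace sum4 /i00 /i01 /i10 /i11.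
field; done.
Qed.


Definition tau (t2 t3 t4 : R) : 'M[C]_(2*2) :=
  real_complex R t2 *: proj (bell2 R) + real_complex R t3 *: proj (bell3 R)
  + real_complex R t4 *: proj (bell4 R).

Definition Lf (t2 t3 t4 : R) (Y : 'M[C]_(2*2)) : 'M[C]_(2*2) :=
  qf (bell1 R) Y *: proj (bell1 R) +
  (qf (bell2 R) Y + qf (ket R 0 1) Y + qf (ket R 1 0) Y) *: tau t2 t3 t4.

Lemma lin_aux (V : lmodType C) (A T : V) (a q1 q2 q3 q4 r1 r2 r3 r4 : C) :
 (a*q1 + r1) *: A + ((a*q2 + r2) + (a*q3 + r3) + (a*q4+r4)) *: T =
 a *: (q1 *: A + (q2+q3+q4) *: T) + (r1 *: A + (r2+r3+r4) *: T).
Proof.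
have -> : (a*q2 + r2) + (a*q3+r3) + (a*q4+r4) = a*(q2+q3+q4) + (r2+r3+r4) by ring.
move: (q2+q3+q4) (r2+r3+r4) => Q Q'.
by rewrite !scalerDl -!scalerA scalerDr addrACA.
Qed.

Lemma Lf_lin t2 t3 t4 : linear (Lf t2 t3 t4).
Proof. by move=> a Y Z; rewrite /Lf !qfY lin_aux. Qed.

HB.instance Definition _ t2 t3 t4 :=
  GRing.isLinear.Build C 'M[C]_(2*2) 'M[C]_(2*2) *:%R (Lf t2 t3 t4) (Lf_lin t2 t3 t4).


Definition Fadd (L1 L2 : 'M[C]_(2*2) -> 'M[C]_(2*2)) Y := L1 Y + L2 Y.
Definition Fsc c (L1 : 'M[C]_(2*2) -> 'M[C]_(2*2)) Y := c *: L1 Y.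
Definition F1 (v w : 'cV[C]_(2*2)) Y := qf v Y *: proj w.
Definition G t2 t3 t4 v := Fadd (Fadd (Fsc (real_complex R t2) (F1 v (bell2 R)))
   (Fsc (real_complex R t3) (F1 v (bell3 R)))) (Fsc (real_complex R t4) (F1 v (bell4 R))).

Lemma cpF1 v w : @completely_positive R (F1 v w). Proof. exact: cp_rank1. Qed.
Lemma cpFadd L1 L2 : @completely_positive R L1 -> @completely_positive R L2 ->
  @completely_positive R (Fadd L1 L2).
Proof. exact: cp_add. Qed.
Lemma cpFsc c L1 : 0 <= c -> @completely_positive R L1 -> @completely_positive R (Fsc c L1).
Proof. exact: cp_scale. Qed.

Lemma GE_aux (V : lmodType C) (P2 P3 P4 : V) q a b c :
  a *: (q *: P2) + b *: (q *: P3) + c *: (q *: P4) = q *: (a *: P2 + b *: P3 + c *: P4).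
Proof. by rewrite !scalerDr !scalerA !(mulrC q). Qed.

Lemma GE t2 t3 t4 v Y : G t2 t3 t4 v Y = qf v Y *: tau t2 t3 t4.
Proof. by rewrite /G /Fadd /Fsc /F1 /tau GE_aux. Qed.

Lemma LfE t2 t3 t4 Y : Fadd (F1 (bell1 R) (bell1 R))
   (Fadd (Fadd (G t2 t3 t4 (bell2 R)) (G t2 t3 t4 (ket R 0 1))) (G t2 t3 t4 (ket R 1 0))) Y
   = Lf t2 t3 t4 Y.
Proof. by rewrite /Fadd !GE /Lf /F1 !scalerDl. Qed.

Lemma Lf_cp t2 t3 t4 : 0 <= t2 -> 0 <= t3 -> 0 <= t4 ->
  @completely_positive R (Lf t2 t3 t4).
Proof.
move=> h2 h3 h4; apply: cp_ext (LfE t2 t3 t4) _.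
have hG : forall v, @completely_positive R (G t2 t3 t4 v).
  move=> v; rewrite /G.
  by apply: cpFadd; [apply: cpFadd|]; (apply: cpFsc; [rewrite ler0c | exact: cpF1]).
apply: cpFadd; first exact: cpF1.
by apply: cpFadd; first apply: cpFadd.
Qed.

Lemma tr_lin_aux n (P1 P2 P3 P4 : 'M[C]_n) q1 Q a b c u1 u2 u3 u4 :
  \tr P1 = u1 -> \tr P2 = u2 -> \tr P3 = u3 -> \tr P4 = u4 ->
  \tr (q1 *: P1 + Q *: (a *: P2 + b *: P3 + c *: P4)) = q1 * u1 + Q * (a * u2 + b * u3 + c * u4).
Proof. by move=> h1 h2 h3 h4; rewrite !mxtraceD !mxtraceZ !mxtraceD !mxtraceZ h1 h2 h3 h4. Qed.

Lemma Lf_tp t2 t3 t4 : t2 + t3 + t4 = 1 -> @trace_preserving R (Lf t2 t3 t4).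
Proof.
move=> ht Y; rewrite /Lf /tau.
rewrite (tr_lin_aux _ _ _ _ _ (tr_proj _) (tr_proj _) (tr_proj _) (tr_proj _)).
rewrite ip_b1 ip_b2 ip_b3 ip_b4 !mulr1 -!rmorphD ht rmorph1 mulr1 !addrA.
exact: qf_sum4.
Qed.


Lemma uv_e0 : unit_vec e0. Proof. by rewrite /unit_vec -/(ip e0 e0) /e0 ip_delta eqxx. Qed.
Lemma uv_e1 : unit_vec e1. Proof. by rewrite /unit_vec -/(ip e1 e1) /e1 ip_delta eqxx. Qed.
Ltac uvtac := rewrite /unit_vec -/(ip _ _) ip_s2 /xp /xm /yp /ym /e0 /e1;
  rewrite ?(ipZl, ipZr, ipDl, ipDr, ipNl, ipNr, ip_delta, eqxx, ne01, ne10, b2R_true, b2R_false, conjCi);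
  field: (ii R); done.
Lemma uv_xp : unit_vec (s2 *: xp). Proof. uvtac. Qed.
Lemma uv_xm : unit_vec (s2 *: xm). Proof. uvtac. Qed.
Lemma uv_yp : unit_vec (s2 *: yp). Proof. uvtac. Qed.
Lemma uv_ym : unit_vec (s2 *: ym). Proof. uvtac. Qed.

Lemma sc12 : sepcone (proj (bell1 R) + proj (bell2 R)).
Proof. rewrite (V12 R); apply: sepcone_add; apply: sepcone_prod; first [exact: uv_e0 | exact: uv_e1]. Qed.
Lemma sc34 : sepcone (proj (bell3 R) + proj (bell4 R)).
Proof. rewrite (V34 R); apply: sepcone_add; apply: sepcone_prod; first [exact: uv_e0 | exact: uv_e1]. Qed.
Lemma sc13 : sepcone (proj (bell1 R) + proj (bell3 R)).
Proof. rewrite (V13 R); apply: sepcone_add; apply: sepcone_prod; first [exact: uv_xp | exact: uv_xm]. Qed.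
Lemma sc24 : sepcone (proj (bell2 R) + proj (bell4 R)).
Proof. rewrite (V24 R); apply: sepcone_add; apply: sepcone_prod; first [exact: uv_xp | exact: uv_xm]. Qed.
Lemma sc14 : sepcone (proj (bell1 R) + proj (bell4 R)).
Proof. rewrite (V14 R); apply: sepcone_add; apply: sepcone_prod; first [exact: uv_yp | exact: uv_ym]. Qed.
Lemma sc23 : sepcone (proj (bell2 R) + proj (bell3 R)).
Proof. rewrite (V23 R); apply: sepcone_add; apply: sepcone_prod; first [exact: uv_yp | exact: uv_ym]. Qed.


Lemma sum2 (F : 'I_2 -> C) : \sum_(a<2) F a = F 0 + F 1.
Proof.
rewrite big_ord_recl big_ord1; congr (_ + _); congr F; exact: val_inj.
Qed.

Lemma uvE (v : 'cV[C]_2) : unit_vec v ->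
  Num.conj (v 0 0) * v 0 0 + Num.conj (v 1 0) * v 1 0 = 1.
Proof. by rewrite /unit_vec mxE sum2 !mxE. Qed.

Lemma qf_prod (phi chi : 'cV[C]_2) :
  qf (bell1 R) (proj phi *t proj chi) =
  2^-1 * ((phi 0 0 * chi 0 0 + phi 1 0 * chi 1 0) *
          Num.conj (phi 0 0 * chi 0 0 + phi 1 0 * chi 1 0)).
Proof.
rewrite /bell1 -/s2 qf_s2 qfE /ket !(bfDl, bfDr, bf_delta).
repeat erewrite tensmxE; repeat erewrite projE.
rewrite !projE cjD !cjM; ring.
Qed.

Lemma zbound (phi chi : 'cV[C]_2) : unit_vec phi -> unit_vec chi ->
  (phi 0 0 * chi 0 0 + phi 1 0 * chi 1 0) *
    Num.conj (phi 0 0 * chi 0 0 + phi 1 0 * chi 1 0) <= 1.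
Proof.
move=> /uvE e /uvE f.
set z := _ * Num.conj _.
pose w := phi 0 0 * Num.conj (chi 1 0) - phi 1 0 * Num.conj (chi 0 0).
have key : 1 - z = w * Num.conj w.
  have -> : 1 - z = (Num.conj (phi 0 0) * phi 0 0 + Num.conj (phi 1 0) * phi 1 0) *
     (Num.conj (chi 0 0) * chi 0 0 + Num.conj (chi 1 0) * chi 1 0) - z.
    by rewrite e f mulr1.
  rewrite /z /w; rewrite !(cjD, cjN, cjM, conjCK); ring.
by rewrite -subr_ge0 key mul_conjC_ge0.
Qed.

Lemma rcM (x y : R) : real_complex R (x * y) = real_complex R x * real_complex R y.
Proof. exact: rmorphM. Qed.
Lemma rcD (x y : R) : real_complex R (x + y) = real_complex R x + real_complex R y.
Proof. exact: rmorphD. Qed.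
Lemma rcB (x y : R) : real_complex R (x - y) = real_complex R x - real_complex R y.
Proof. exact: rmorphB. Qed.
Lemma rc1 : real_complex R 1 = 1. Proof. exact: rmorph1. Qed.
Lemma rc2 : real_complex R 2 = 2. Proof. exact: rmorph_nat. Qed.
Lemma rcV (x : R) : real_complex R (x^-1) = (real_complex R x)^-1.
Proof. exact: fmorphV. Qed.

Lemma out_decomp (P1 P2 P3 P4 : 'M[C]_(2*2)) (r t2 t3 t4 : R) : t2 + t3 + t4 = 1 ->
  real_complex R r *: P1 + real_complex R (1 - r) *:
    (real_complex R t2 *: P2 + real_complex R t3 *: P3 + real_complex R t4 *: P4) =
  real_complex R (r * t2) *: (P1+P2) + real_complex R (r * t3) *: (P1+P3)
  + real_complex R (r * t4) *: (P1+P4)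
  + real_complex R ((1-2 * r)*(1-2 * t4)/2) *: (P2+P3)
  + real_complex R ((1-2 * r)*(1-2 * t3)/2) *: (P2+P4)
  + real_complex R ((1-2 * r)*(1-2 * t2)/2) *: (P3+P4).
Proof.
move=> ht.
have htC : real_complex R t2 + real_complex R t3 + real_complex R t4 = 1.
  by rewrite -!rcD ht rc1.
apply/matrixP=> i j; repeat (erewrite (@mxaddE R) || erewrite (@mxscaleE R)).
rewrite !(rcM, rcB, rcV, rc1, rc2).
have ht4 : real_complex R t4 = 1 - real_complex R t2 - real_complex R t3 by rewrite -htC; ring.
rewrite ht4. field; done.
Qed.


Lemma Lf_sep (t2 t3 t4 : R) : 0 <= t2 -> 0 <= t3 -> 0 <= t4 ->
  t2 <= 2^-1 -> t3 <= 2^-1 -> t4 <= 2^-1 -> t2 + t3 + t4 = 1 ->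
  forall rho, density rho -> separable rho -> separable (Lf t2 t3 t4 rho).
Proof.
move=> h2 h3 h4 k2 k3 k4 ht rho [_ htr] [N [p [phi [chi [hp [hs [hu erho]]]]]]].
have htrL : \tr (Lf t2 t3 t4 rho) = 1 by rewrite Lf_tp.
pose q := qf (bell1 R) rho.
have hq : q = \sum_(k < N) real_complex R (p k) *
    (2^-1 * ((phi k 0 0 * chi k 0 0 + phi k 1 0 * chi k 1 0) *
          Num.conj (phi k 0 0 * chi k 0 0 + phi k 1 0 * chi k 1 0))).
  by rewrite /q erho qf_sum; apply: eq_bigr => k _; rewrite qfZ qf_prod.
have q0 : 0 <= q.
  rewrite hq; apply: sumr_ge0 => k _; apply: mulr_ge0; first by rewrite ler0c.
  by apply: mulr_ge0; [rewrite invr_ge0 ler0n | exact: mul_conjC_ge0].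
have q1 : q <= 2^-1.
  rewrite hq; apply: (@le_trans _ _ (\sum_(k < N) real_complex R (p k) * 2^-1)).
    apply: ler_sum => k _; apply: ler_wpM2l; first by rewrite ler0c.
    rewrite -[X in _ <= X]mulr1; apply: ler_wpM2l; first by rewrite invr_ge0 ler0n.
    by case: (hu k) => u1 u2; exact: zbound.
  by rewrite -mulr_suml -rmorph_sum hs rmorph1 mul1r.
have [r hr] : exists r : R, q = real_complex R r.
  move: q0; rewrite /q; case: (qf _ _) => a b h; exists a.
  by have /= -> := ger0_Im h.
have r0 : 0 <= r by rewrite -ler0c -hr.
have r1 : r <= 2^-1.
  by rewrite -(@lecR R) -hr rcV rc2.
have hrest : qf (bell2 R) rho + qf (ket R 0 1) rho + qf (ket R 1 0) rho = 1 - q.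
  rewrite -htr -(qf_sum4 rho) -/q; ring.
have eL : Lf t2 t3 t4 rho = real_complex R r *: proj (bell1 R) +
    real_complex R (1 - r) *: tau t2 t3 t4.
  by rewrite /Lf -/q hrest hr rcB rc1.
rewrite eL in htrL *.
apply: sep_of_cone => //.
rewrite /tau out_decomp //.
have hh : forall x : R, 0 <= x -> x <= 2^-1 -> 0 <= 1 - 2 * x.
  move=> x x0 x1; rewrite subr_ge0 -(@ler_pM2r _ (2^-1)) ?invr_gt0 ?ltr0n //.
  by rewrite mul1r mulrC mulrA mulVf ?mul1r // pnatr_eq0.
have e2 := hh r r0 r1.
have f2 := hh t2 h2 k2. have f3 := hh t3 h3 k3. have f4 := hh t4 h4 k4.
have z2 : (0:R) <= 2 by rewrite ler0n.
have s1 := sepcone_scale (mulr_ge0 r0 h2) sc12.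
have s2 := sepcone_scale (mulr_ge0 r0 h3) sc13.
have s3 := sepcone_scale (mulr_ge0 r0 h4) sc14.
have s4 := sepcone_scale (divr_ge0 (mulr_ge0 e2 f4) z2) sc23.
have s5 := sepcone_scale (divr_ge0 (mulr_ge0 e2 f3) z2) sc24.
have s6 := sepcone_scale (divr_ge0 (mulr_ge0 e2 f2) z2) sc34.
exact: (sepcone_add (sepcone_add (sepcone_add (sepcone_add (sepcone_add s1 s2) s3) s4) s5) s6).
Qed.

Lemma qv_b1_b1 : qf (bell1 R) (proj (bell1 R)) = 1.
Proof. rewrite qf_proj; ipcrunch; field: (s2s2 R); done. Qed.
Lemma qv_b1_b2 : qf (bell1 R) (proj (bell2 R)) = 0.
Proof. rewrite qf_proj; ipcrunch; ring. Qed.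
Lemma qv_b1_k01 : qf (bell1 R) (proj (ket R 0 1)) = 0.
Proof. rewrite qf_proj; ipcrunch; ring. Qed.
Lemma qv_b1_k10 : qf (bell1 R) (proj (ket R 1 0)) = 0.
Proof. rewrite qf_proj; ipcrunch; ring. Qed.
Lemma qv_b2_b1 : qf (bell2 R) (proj (bell1 R)) = 0.
Proof. rewrite qf_proj; ipcrunch; ring. Qed.
Lemma qv_b2_b2 : qf (bell2 R) (proj (bell2 R)) = 1.
Proof. rewrite qf_proj; ipcrunch; field: (s2s2 R); done. Qed.
Lemma qv_b2_k01 : qf (bell2 R) (proj (ket R 0 1)) = 0.
Proof. rewrite qf_proj; ipcrunch; ring. Qed.
Lemma qv_b2_k10 : qf (bell2 R) (proj (ket R 1 0)) = 0.
Proof. rewrite qf_proj; ipcrunch; ring. Qed.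
Lemma qv_k01_b1 : qf (ket R 0 1) (proj (bell1 R)) = 0.
Proof. rewrite qf_proj; ipcrunch; ring. Qed.
Lemma qv_k01_b2 : qf (ket R 0 1) (proj (bell2 R)) = 0.
Proof. rewrite qf_proj; ipcrunch; ring. Qed.
Lemma qv_k01_k01 : qf (ket R 0 1) (proj (ket R 0 1)) = 1.
Proof. rewrite qf_proj; ipcrunch; field: (s2s2 R); done. Qed.
Lemma qv_k01_k10 : qf (ket R 0 1) (proj (ket R 1 0)) = 0.
Proof. rewrite qf_proj; ipcrunch; ring. Qed.
Lemma qv_k10_b1 : qf (ket R 1 0) (proj (bell1 R)) = 0.
Proof. rewrite qf_proj; ipcrunch; ring. Qed.
Lemma qv_k10_b2 : qf (ket R 1 0) (proj (bell2 R)) = 0.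
Proof. rewrite qf_proj; ipcrunch; ring. Qed.
Lemma qv_k10_k01 : qf (ket R 1 0) (proj (ket R 0 1)) = 0.
Proof. rewrite qf_proj; ipcrunch; ring. Qed.
Lemma qv_k10_k10 : qf (ket R 1 0) (proj (ket R 1 0)) = 1.
Proof. rewrite qf_proj; ipcrunch; field: (s2s2 R); done. Qed.

Lemma qf4 n (v : 'cV[C]_n) a b c d A B C' D :
  qf v (a *: A + b *: B + c *: C' + d *: D) = a * qf v A + b * qf v B + c * qf v C' + d * qf v D.
Proof. by rewrite !qfD !qfZ. Qed.

Lemma qf_rho (l1 l2 l3 l4 : R) :
  qf (bell1 R) (rho_lam l1 l2 l3 l4) = real_complex R l1 /\
  qf (bell2 R) (rho_lam l1 l2 l3 l4) + qf (ket R 0 1) (rho_lam l1 l2 l3 l4)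
   + qf (ket R 1 0) (rho_lam l1 l2 l3 l4) = real_complex R (l2 + l3 + l4).
Proof.
rewrite /rho_lam; repeat erewrite qf4.
repeat erewrite qv_b1_b1.
repeat erewrite qv_b1_b2.
repeat erewrite qv_b1_k01.
repeat erewrite qv_b1_k10.
repeat erewrite qv_b2_b1.
repeat erewrite qv_b2_b2.
repeat erewrite qv_b2_k01.
repeat erewrite qv_b2_k10.
repeat erewrite qv_k01_b1.
repeat erewrite qv_k01_b2.
repeat erewrite qv_k01_k01.
repeat erewrite qv_k01_k10.
repeat erewrite qv_k10_b1.
repeat erewrite qv_k10_b2.
repeat erewrite qv_k10_k01.
repeat erewrite qv_k10_k10.
rewrite !rcD; split; ring.
Qed.

Lemma fin_aux (P1 P2 P3 P4 : 'M[C]_(2*2)) (l1 l2 l3 l4 : R) : l2 + l3 + l4 != 0 ->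
  real_complex R l1 *: P1 + real_complex R (l2 + l3 + l4) *:
    (real_complex R (l2 / (l2 + l3 + l4)) *: P2 + real_complex R (l3 / (l2 + l3 + l4)) *: P3
     + real_complex R (l4 / (l2 + l3 + l4)) *: P4) =
  real_complex R l1 *: P1 + real_complex R l2 *: P2 + real_complex R l3 *: P3
  + real_complex R l4 *: P4.
Proof.
move=> hS.
have hSC : real_complex R l2 + real_complex R l3 + real_complex R l4 != 0.
  by rewrite -!rcD; apply: contra hS => /eqP /(@complexI R) ->.
apply/matrixP=> i j; repeat (erewrite (@mxaddE R) || erewrite (@mxscaleE R)).
rewrite !(rcM, rcD, rcV).
field; done.
Qed.

Lemma fin_aux0 (P1 : 'M[C]_(2*2)) (T : 'M[C]_(2*2)) P2 P3 P4 (l1 : R) :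
  real_complex R l1 *: P1 + real_complex R 0 *: T =
  real_complex R l1 *: P1 + real_complex R 0 *: P2 + real_complex R 0 *: P3
  + real_complex R 0 *: P4.
Proof. by rewrite !rmorph0 !scale0r !addr0. Qed.

End S2.

Theorem theorem3 (R : realType) (l1 l2 l3 l4 : R) :
  l1 >= l2 -> l2 >= l3 -> l3 >= l4 -> l4 >= 0 ->
  l1 + l2 + l3 + l4 = 1 ->
  1 - l1 - 2 * l2 >= 0 ->
  exists L : {linear 'M[R[i]]_(2 * 2) -> 'M[R[i]]_(2 * 2)},
    non_entangling L /\ L (rho_lam l1 l2 l3 l4) = sigma_lam l1 l2 l3 l4.
Proof.
move=> h12 h23 h34 h4 hsum hc.
have LfNE : forall t2 t3 t4 : R, 0 <= t2 -> 0 <= t3 -> 0 <= t4 ->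
  t2 <= 2^-1 -> t3 <= 2^-1 -> t4 <= 2^-1 -> t2 + t3 + t4 = 1 ->
  non_entangling (Lf t2 t3 t4 : {linear 'M[R[i]]_(2 * 2) -> 'M[R[i]]_(2 * 2)}).
  move=> t2 t3 t4 a2 a3 a4 b2 b3 b4 ht; split; first exact: Lf_cp.
  split; first exact: Lf_tp.
  exact: Lf_sep.
have [q1 q2] := qf_rho l1 l2 l3 l4.
have hS0 : 0 <= l2 + l3 + l4 by lra.
have [hS|hS] := eqVneq (l2 + l3 + l4) 0.
  have e2 : l2 = 0 by lra.
  have e3 : l3 = 0 by lra.
  have e4 : l4 = 0 by lra.
  have hh : (0:R) <= 2^-1 by rewrite invr_ge0 ler0n.
  exists (Lf 2^-1 2^-1 0 : {linear 'M[R[i]]_(2 * 2) -> 'M[R[i]]_(2 * 2)}); split.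
    apply: LfNE; rewrite ?lexx //; field; done.
  rewrite /= /Lf q1 q2 hS /sigma_lam e2 e3 e4; exact: fin_aux0.
have Sp : 0 < l2 + l3 + l4 by rewrite lt_def hS hS0.
have hb : forall x : R, x <= l2 -> 0 <= x -> x / (l2 + l3 + l4) <= 2^-1.
  move=> x hx x0; rewrite ler_pdivrMr //.
  have -> : 2^-1 * (l2 + l3 + l4) = (l2 + l3 + l4) / 2 by rewrite mulrC.
  rewrite ler_pdivlMr ?ltr0n //; lra.
exists (Lf (l2 / (l2 + l3 + l4)) (l3 / (l2 + l3 + l4)) (l4 / (l2 + l3 + l4))
   : {linear 'M[R[i]]_(2 * 2) -> 'M[R[i]]_(2 * 2)}); split.
  apply: LfNE.
  - by apply: divr_ge0; lra.
  - by apply: divr_ge0; lra.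
  - by apply: divr_ge0; lra.
  - by apply: hb; lra.
  - by apply: hb; lra.
  - by apply: hb; lra.
  - by rewrite -!mulrDl mulfV.
rewrite /= /Lf q1 q2 /sigma_lam /tau.
exact: fin_aux.
Qed.
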